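(* Consider a connectivity graph $G=(V,E)$ with source $s$, a set $R$ of $n$ relay nodes, and a terminal node $t$, and let $p'$ be the probability that two given nodes of $G$ are joined by an edge. Let $0\le k\le n$, let $(V_k,\overline{V}_k)$ be any partition of $R$ with $|V_k|=k$ and $|\overline V_k|=n-k$, and let $C_k$ be the capacity of the corresponding $s$-$t$-cut. Then for every $0<\epsilon<1$, $$\Pr\big[C_k\le (1-\epsilon)\,\mathbf{E}[C_k]\big]\;\le\;\exp\!\Big(-\Big(\frac{\epsilon^2 (n-k)\,p'}{2}-\ln(k+1)\Big)\Big).$$
   Context: Quasi random geometric graph: fix reals $0\le r<r'\le 1$ and $p\in[0,1]$. Nodes are placed independently and uniformly at random in $[0,1]^2$. For two nodes $u,v$ with Euclidean distance $d(u,v)$: $(u,v)\in E$ if $d(u,v)\le r$; $(u,v)\notin E$ if $d(u,v)>r'$; and $(u,v)\in E$ with probability $p$ if $r<d(u,v)\le r'$. The graph is undirected. Connectivity graph: $V=\{s\}\cup R\cup T$, where $s$ is a source node, $R$ is a set of $n$ relay nodes and $T$ is a set of terminal nodes, and the graph is a quasi random geometric graph on $V$, except that the source is never joined directly to a terminal (every message passes through at least one relay). The source only sends and the terminals only receive. Edge capacities are $C_{ij}=1$ if $(i,j)\in E$ and $C_{ij}=0$ otherwise, with $C_{ij}=C_{ji}$. The connection probability $p'$ is the probability that two given nodes are joined by an edge; it is the same for every pair of nodes that may be joined. Standing assumption: for each fixed vertex $i$, the indicators $\{C_{ij}\}_{j\neq i}$ are mutually independent Bernoulli($p'$) random variables.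 $s$-$t$-cut of size $k$: for a terminal $t\in T$, a partition $R=V_k\cup\overline V_k$ with $V_k\cap\overline V_k=\emptyset$, $|V_k|=k$ and $|\overline V_k|=n-k$. The sets $\{s\}\cup V_k$ and $\overline V_k\cup\{t\}$ are the two sides of the cut. Its capacity is $$C_k=\sum_{i\in\overline V_k}C_{si}+\sum_{j\in V_k}\sum_{i\in\overline V_k}C_{ji}+\sum_{j\in V_k}C_{jt}.$$ *)

(* Defs.v *)
From mathcomp Require Import all_boot.
From Stdlib Require Import Reals.
Set Implicit Arguments.
Unset Strict Implicit.
Unset Printing Implicit Defensive.

(* Vertices of the connectivity graph with n relays and m terminals:
   None = the source s, Some (inl i) = relay i, Some (inr j) = terminal j. *)
Definition vertex (n m : nat) : finType := option ('I_n + 'I_m)%type.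
Definition src {n m : nat} : vertex n m := None.
Definition relay {n m : nat} (i : 'I_n) : vertex n m := Some (inl i).
Definition term {n m : nat} (j : 'I_m) : vertex n m := Some (inr j).

Definition is_term {n m : nat} (v : vertex n m) : bool :=
  if v is Some (inr _) then true else false.

(* Pairs of distinct nodes that may be joined by an edge:
   the source is never joined directly to a terminal. *)
Definition joinable {n m : nat} (u v : vertex n m) : bool :=
  [&& u != v, ~~ ((u == src) && is_term v) & ~~ ((v == src) && is_term u)].

Definition is_prob {Omega : finType} (P : Omega -> R) : Prop :=
  (forall w, (0 <= P w)%R) /\ \big[Rplus/0%R]_(w : Omega) P w = 1%R.

Definition Pr {Omega : finType} (P : Omega -> R) (A : Omega -> bool) : R :=
  \big[Rplus/0%R]_(w : Omega | A w) P w.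

Definition Ex {Omega : finType} (P : Omega -> R) (X : Omega -> R) : R :=
  \big[Rplus/0%R]_(w : Omega) (P w * X w)%R.

Definition b2R (b : bool) : R := if b then 1%R else 0%R.

(* Standing assumption: for each vertex i, the indicators C i j (j ranging
   over the nodes that may be joined to i) are mutually independent
   Bernoulli(p') random variables. *)
Definition indep_bernoulli {Omega : finType} {n m : nat} (P : Omega -> R)
    (C : vertex n m -> vertex n m -> Omega -> bool) (p' : R) : Prop :=
  forall (i : vertex n m) (S : {set vertex n m}) (b : vertex n m -> bool),
    (forall j, j \in S -> joinable i j) ->
    Pr P (fun w => [forall j in S, C i j w == b j]) =
    \big[Rmult/1%R]_(j in S) (if b j then p' else (1 - p')%R).

(* Capacity of the s-t-cut with sides {s} ∪ Vk and (R \ Vk) ∪ {t}. *)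
Definition cut_capacity {Omega : finType} {n m : nat}
    (C : vertex n m -> vertex n m -> Omega -> bool)
    (Vk : {set 'I_n}) (t : 'I_m) (w : Omega) : nat :=
  (\sum_(i in ~: Vk) C src (relay i) w
   + \sum_(j in Vk) \sum_(i in ~: Vk) C (relay j) (relay i) w
   + \sum_(j in Vk) C (relay j) (term t) w)%N.

Definition Rleb (x y : R) : bool := if Rle_dec x y then true else false.

(* Main.v *)
Require Import Defs.
From mathcomp Require Import all_boot.
From Stdlib Require Import Reals.
From HB Require Import structures.
From Stdlib Require Import Lra Psatz.

Lemma Rplus_assoc' : associative Rplus.
Proof. move=> x y z; ring. Qed.
HB.instance Definition _ := Monoid.isComLaw.Build R 0%R Rplus Rplus_assoc' Rplus_comm Rplus_0_l.

Lemma sinh_ge (z : R) : (0 <= z)%R -> (z <= sinh z)%R.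
Proof.
move=> hz; case: (Rle_lt_or_eq_dec 0 z hz) => [hz'|<-]; last by rewrite sinh_0; lra.
have [c [Hc Hcb]] := MVT_cor2 (fun x => sinh x - x)%R (fun x => cosh x - 1)%R 0 z hz'
  (fun c _ => derivable_pt_lim_minus sinh id c _ _ (derivable_pt_lim_sinh c) (derivable_pt_lim_id c)).
rewrite sinh_0 in Hc.
have : (1 <= cosh c)%R.
  rewrite /cosh; have := exp_ineq1_le c; have := exp_ineq1_le (- c); lra.
move=> h1; have : (0 <= (cosh c - 1) * (z - 0))%R by apply Rmult_le_pos; lra.
lra.
Qed.

Lemma scalar_ineq (eps : R) : (0 < eps < 1)%R ->
  (- ln (1 - eps) * (1 - eps) - eps <= - (eps ^ 2 / 2))%R.
Proof.
move=> he; set z := (- ln (1 - eps))%R.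
have hz : (0 <= z)%R.
  rewrite /z; have : (ln (1 - eps) < ln 1)%R by apply ln_increasing; lra.
  rewrite ln_1; lra.
have hb : exp (- z) = (1 - eps)%R by rewrite /z Ropp_involutive exp_ln //; lra.
have ha : (exp z * exp (- z) = 1)%R by rewrite -exp_plus Rplus_opp_r exp_0.
have hs := sinh_ge z hz; rewrite /sinh in hs.
rewrite hb in ha hs.
have : (z * (1 - eps) <= (exp z - (1 - eps)) / 2 * (1 - eps))%R.
  apply Rmult_le_compat_r; lra.
nra.
Qed.

Section ExLemmas.
Variables (Omega : finType) (P : Omega -> R).

Lemma Ex_ext f g : (forall w, f w = g w) -> Ex P f = Ex P g.
Proof. by move=> H; rewrite /Ex; apply: eq_bigr => w _; rewrite H. Qed.

Lemma Ex_lin f g c : Ex P (fun w => f w + c * g w)%R = (Ex P f + c * Ex P g)%R.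
Proof. rewrite /Ex; elim/big_rec3: _ => [|w a b d _ ->]; ring. Qed.

Lemma Ex_add f g : Ex P (fun w => f w + g w)%R = (Ex P f + Ex P g)%R.
Proof. rewrite (Ex_ext _ (fun w => f w + 1 * g w)%R); last by move=> w; ring.
by rewrite Ex_lin Rmult_1_l. Qed.

Lemma Ex_scale f c : Ex P (fun w => c * f w)%R = (c * Ex P f)%R.
Proof. rewrite /Ex; elim/big_rec2: _ => [|w a b _ ->]; ring. Qed.

Lemma Ex0 : Ex P (fun _ => 0%R) = 0%R.
Proof. rewrite /Ex; elim/big_rec: _ => [|w a _ ->]; ring. Qed.

Lemma Ex_mono f g : (forall w, 0 <= P w)%R -> (forall w, f w <= g w)%R -> (Ex P f <= Ex P g)%R.
Proof.
move=> HP H; rewrite /Ex; elim/big_rec2: _ => [|w a b _ Hab]; first lra.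
apply Rplus_le_compat => //; apply Rmult_le_compat_l => //.
Qed.

Lemma Ex_sum (I : Type) (r : seq I) (F : I -> Omega -> R) :
  Ex P (fun w => \big[Rplus/0%R]_(j <- r) F j w) = \big[Rplus/0%R]_(j <- r) Ex P (F j).
Proof.
elim: r => [|j r IH].
  by rewrite big_nil (Ex_ext _ (fun _ => 0%R)) ?Ex0 // => w; rewrite big_nil.
rewrite big_cons -IH -Ex_add; apply: Ex_ext => w; by rewrite big_cons.
Qed.

Lemma Pr_Ex A : Pr P A = Ex P (fun w => b2R (A w)).
Proof.
rewrite /Pr /Ex big_mkcond; apply: eq_bigr => w _; case: (A w) => /=; ring.
Qed.

End ExLemmas.

Lemma sum_nonneg {I : Type} (r : seq I) (F : I -> R) :
  (forall j, 0 <= F j)%R -> (0 <= \big[Rplus/0%R]_(j <- r) F j)%R.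
Proof. move=> H; elim/big_rec: _ => [|j a _ Ha]; [lra | have := H j; lra]. Qed.

Lemma sum_ge_mem (I : eqType) (r : seq I) (F : I -> R) j :
  (forall j, 0 <= F j)%R -> j \in r -> (F j <= \big[Rplus/0%R]_(i <- r) F i)%R.
Proof.
move=> H; elim: r => [//|i r IH]; rewrite in_cons big_cons => /orP [/eqP ->|jr].
  have := sum_nonneg r F H; lra.
have := IH jr; have := H i; lra.
Qed.

Lemma b2R_ge0 b : (0 <= b2R b)%R.
Proof. case: b => /=; lra. Qed.

Lemma union_bound (Omega : finType) (P : Omega -> R) (I : eqType) (r : seq I)
  (A B : Omega -> bool) (D : I -> Omega -> bool) :
  (forall w, 0 <= P w)%R ->
  (forall w, A w -> B w || has (fun j => D j w) r) ->
  (Pr P A <= Pr P B + \big[Rplus/0%R]_(j <- r) Pr P (D j))%R.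
Proof.
move=> HP H.
rewrite !Pr_Ex (eq_bigr (fun j => Ex P (fun w => b2R (D j w)))); last by move=> j _; rewrite Pr_Ex.
rewrite -Ex_sum -Ex_add; apply: Ex_mono => // w.
have Hs := sum_nonneg r (fun j => b2R (D j w)) (fun j => b2R_ge0 (D j w)).
case Aw: (A w); last by have := b2R_ge0 (B w); simpl; lra.
move: (H w Aw) => /orP [->|/hasP [j jr Dj]]; first by simpl; lra.
have := @sum_ge_mem _ r (fun j => b2R (D j w)) j (fun j => b2R_ge0 (D j w)) jr.
rewrite /= Dj /=; have := b2R_ge0 (B w); lra.
Qed.

Lemma prod_const_card (T : finType) (U : {set T}) (x : R) :
  \big[Rmult/1%R]_(j in U) x = (x ^ #|U|)%R.
Proof.
rewrite big_const; elim: #|U| => [//|k IH] /=; by rewrite IH.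
Qed.

Lemma forall_U1 (T : finType) (a : T) (U : {set T}) (f : T -> bool) :
  [forall j in a |: U, f j] = f a && [forall j in U, f j].
Proof.
apply/idP/idP.
  move/forall_inP => H; rewrite H ?setU11 //=; apply/forall_inP => j jU.
  by apply: H; rewrite in_setU1 jU orbT.
case/andP => H0 /forall_inP H; apply/forall_inP => j; rewrite in_setU1.
by case/orP => [/eqP -> //|/H].
Qed.

Lemma b2R_and a b : b2R (a && b) = (b2R a * b2R b)%R.
Proof. case: a; case: b => /=; ring. Qed.

Lemma keyK (Omega : finType) (P : Omega -> R) (n m : nat)
  (C : vertex n m -> vertex n m -> Omega -> bool) (p' : R) (v : vertex n m) (c : R) :
  indep_bernoulli P C p' ->
  forall (s : seq (vertex n m)) (U : {set vertex n m}),
  uniq s -> (forall j, j \in s -> joinable v j) -> (forall j, j \in U -> joinable v j) ->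
  (forall j, j \in s -> j \notin U) ->
  Ex P (fun w => b2R [forall j in U, C v j w] *
                 \big[Rmult/1%R]_(j <- s) (1 - c * b2R (C v j w)))%R
  = (p' ^ #|U| * (1 - c * p') ^ size s)%R.
Proof.
move=> Hind; elim=> [|j0 s IH] U Hu Hs HU Hd.
  rewrite /= Rmult_1_r -(prod_const_card _ U p').
  rewrite -(Hind v U (fun _ => true) HU) Pr_Ex; apply: Ex_ext => w.
  rewrite big_nil Rmult_1_r; congr b2R.
  by apply: eq_forallb => j; rewrite eqb_id.
move: Hu => /= /andP [j0s Hu].
have Hj0 : j0 \notin U by apply: Hd; rewrite in_cons eqxx.
rewrite (@Ex_ext _ P _ (fun w => b2R [forall j in U, C v j w] *
      \big[Rmult/1%R]_(j <- s) (1 - c * b2R (C v j w)) +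
      (- c) * (b2R [forall j in j0 |: U, C v j w] *
      \big[Rmult/1%R]_(j <- s) (1 - c * b2R (C v j w))))%R); last first.
  by move=> w; rewrite big_cons forall_U1 b2R_and; set X := \big[Rmult/1%R]_(j <- s) _; set a := b2R _; set b := b2R (C v j0 w); ring.
rewrite Ex_lin !IH //.
- rewrite cardsU1 Hj0 add1n /=; ring.
- by move=> j js; apply: Hs; rewrite in_cons js orbT.
- move=> j; rewrite in_setU1 => /orP [/eqP ->|]; last exact: HU.
  by apply: Hs; rewrite in_cons eqxx.
- move=> j js; rewrite in_setU1 negb_or Hd ?in_cons ?js ?orbT // andbT.
  by apply/eqP => E; move: j0s; rewrite -E js.
- by move=> j js; apply: Hs; rewrite in_cons js orbT.
- by move=> j js; apply: Hd; rewrite in_cons js orbT.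
Qed.

Lemma exp_le (x y : R) : (x <= y)%R -> (exp x <= exp y)%R.
Proof. move=> H; case: (Rle_lt_or_eq_dec x y H) => [/exp_increasing|->]; lra. Qed.

Lemma exp_pow_INR (x : R) (N : nat) : (exp x ^ N)%R = exp (INR N * x).
Proof.
elim: N => [|N IH]; first by rewrite /= Rmult_0_l exp_0.
by rewrite [LHS]/= IH S_INR -exp_plus; congr exp; ring.
Qed.

Lemma INR_b b : INR (nat_of_bool b) = b2R b.
Proof. by case: b. Qed.

Lemma INR_sum_b {I : Type} (s : seq I) (F : I -> bool) :
  INR (\sum_(j <- s) (F j : nat)) = \big[Rplus/0%R]_(j <- s) b2R (F j).
Proof.
elim: s => [|j s IH]; first by rewrite !big_nil.
by rewrite !big_cons -plusE plus_INR IH INR_b.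
Qed.

Lemma prod_exp {I : Type} (s : seq I) (F : I -> bool) (eps : R) : (0 < eps < 1)%R ->
  \big[Rmult/1%R]_(j <- s) (1 - eps * b2R (F j))%R
  = exp (ln (1 - eps) * INR (\sum_(j <- s) (F j : nat))).
Proof.
move=> he; elim: s => [|j s IH]; first by rewrite !big_nil; change (INR 0) with 0%R; rewrite Rmult_0_r exp_0.
rewrite !big_cons -plusE plus_INR IH Rmult_plus_distr_l exp_plus INR_b.
case: (F j) => /=; last by rewrite !Rmult_0_r exp_0 Rminus_0_r.
rewrite !Rmult_1_r exp_ln; [reflexivity|lra].
Qed.

Lemma sum_const_R {I : Type} (s : seq I) (x : R) :
  \big[Rplus/0%R]_(j <- s) x = (INR (size s) * x)%R.
Proof.
elim: s => [|j s IH]; first by rewrite big_nil /=; ring.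
by rewrite big_cons IH (_ : size (j :: s) = (size s).+1) // S_INR; ring.
Qed.

Lemma forall_set1 (T : finType) (a : T) (f : T -> bool) :
  [forall j in [set a], f j] = f a.
Proof.
apply/forall_inP/idP => [H|H j]; first by apply: H; rewrite set11.
by rewrite in_set1 => /eqP ->.
Qed.

Lemma forall_set0 (T : finType) (f : T -> bool) : [forall j in set0, f j] = true.
Proof. by apply/forall_inP => j; rewrite in_set0. Qed.

Lemma group (Omega : finType) (P : Omega -> R) (n m : nat)
  (C : vertex n m -> vertex n m -> Omega -> bool) (p' : R) (v : vertex n m)
  (s : seq (vertex n m)) (eps : R) :
  is_prob P -> indep_bernoulli P C p' -> (0 <= p' <= 1)%R -> uniq s ->
  (forall j, j \in s -> joinable v j) -> (0 < eps < 1)%R ->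
  Ex P (fun w => INR (\sum_(j <- s) C v j w)) = (INR (size s) * p')%R /\
  (Pr P (fun w => Rleb (INR (\sum_(j <- s) C v j w)) ((1 - eps) * (INR (size s) * p')))
    <= exp (- (eps ^ 2 * INR (size s) * p' / 2)))%R.
Proof.
move=> [HP _] Hind Hp Hu Hs He; split.
  rewrite (@Ex_ext _ P _ (fun w => \big[Rplus/0%R]_(j <- s) b2R (C v j w))); last first.
    by move=> w; rewrite INR_sum_b.
  rewrite Ex_sum -sum_const_R; apply: eq_big_seq => j js.
  have HU : forall j', j' \in [set j] -> joinable v j'.
    by move=> j'; rewrite in_set1 => /eqP ->; apply: Hs.
  have H0 : forall j' : vertex n m, j' \in [::] -> joinable v j' by [].
  have H1 : forall j' : vertex n m, j' \in [::] -> j' \notin [set j] by [].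
  have K := @keyK _ P _ _ C p' v 0%R Hind [::] [set j] isT H0 HU H1.
  rewrite cards1 /= in K; transitivity (p' * 1 * 1)%R; last by ring.
  rewrite -K; apply: Ex_ext => w; by rewrite big_nil Rmult_1_r forall_set1.
set L := ln (1 - eps); set a := ((1 - eps) * (INR (size s) * p'))%R.
have HL : (L < 0)%R.
  rewrite /L -ln_1; apply ln_increasing; lra.
rewrite Pr_Ex.
apply Rle_trans with (Ex P (fun w => exp (- L * a) * (b2R [forall j in set0, C v j w] *
   \big[Rmult/1%R]_(j <- s) (1 - eps * b2R (C v j w))))%R).
  apply: Ex_mono => // w; rewrite forall_set0 prod_exp // Rmult_1_l -exp_plus.
  rewrite /Rleb -/L; case: Rle_dec => h /=; last by apply: Rlt_le; apply: exp_pos.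
  set X := INR _ in h *.
  have hy : (0 <= - L * a + L * X)%R.
    rewrite (_ : (- L * a + L * X = (- L) * (a - X))%R); last by ring.
    apply Rmult_le_pos; lra.
  apply Rle_trans with (1 + (- L * a + L * X))%R; [lra | apply exp_ineq1_le].
rewrite Ex_scale.
have H0 : forall j' : vertex n m, j' \in set0 -> joinable v j' by move=> j'; rewrite in_set0.
have H1 : forall j' : vertex n m, j' \in s -> j' \notin set0 by move=> j'; rewrite in_set0.
rewrite (@keyK _ P _ _ C p' v eps Hind s set0 Hu Hs H0 H1) cards0 /= Rmult_1_l.
apply Rle_trans with (exp (- L * a) * exp (INR (size s) * (- (eps * p'))))%R.
  apply Rmult_le_compat_l; first by left; apply exp_pos.
  rewrite -exp_pow_INR; apply pow_incr; split; first nra.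
  have := exp_ineq1_le (- (eps * p')); lra.
rewrite -exp_plus; apply exp_le.
have Hsc := scalar_ineq eps He; rewrite -/L in Hsc.
have hN : (0 <= INR (size s) * p')%R by apply Rmult_le_pos; [apply pos_INR|lra].
have := Rmult_le_compat_l _ _ _ hN Hsc; rewrite /a; clearbody L; move=> H; set N := INR _ in H *; nra.
Qed.

Lemma RlebP1 x y : Rleb x y -> (x <= y)%R.
Proof. by rewrite /Rleb; case: Rle_dec. Qed.

Lemma RlebN x y : ~~ Rleb x y -> (y < x)%R.
Proof. rewrite /Rleb; case: Rle_dec => //= h _; lra. Qed.

Lemma sum_le_seq {I : eqType} (r : seq I) (f g : I -> R) :
  (forall j, j \in r -> f j <= g j)%R ->
  (\big[Rplus/0%R]_(j <- r) f j <= \big[Rplus/0%R]_(j <- r) g j)%R.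
Proof.
elim: r => [|j r IH] H; first by rewrite !big_nil; lra.
rewrite !big_cons; apply Rplus_le_compat; first by apply: H; rewrite in_cons eqxx.
by apply: IH => i ir; apply: H; rewrite in_cons ir orbT.
Qed.

Lemma sum_scale {I : Type} (r : seq I) (f : I -> R) c :
  \big[Rplus/0%R]_(j <- r) (c * f j)%R = (c * \big[Rplus/0%R]_(j <- r) f j)%R.
Proof. elim: r => [|j r IH]; rewrite ?big_nil ?big_cons ?IH; ring. Qed.

Theorem theorem8 (Omega : finType) (P : Omega -> R) (n m : nat)
  (C : vertex n m -> vertex n m -> Omega -> bool) (p' : R)
  (t : 'I_m) (k : nat) (Vk : {set 'I_n}) (eps : R) :
  is_prob P ->
  (forall u v w, C u v w = C v u w) ->
  (forall u v w, ~~ joinable u v -> C u v w = false) ->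
  (0 <= p' <= 1)%R ->
  indep_bernoulli P C p' ->
  #|Vk| = k ->
  (0 < eps < 1)%R ->
  (Pr P (fun w => Rleb (INR (cut_capacity C Vk t w))
                       ((1 - eps) * Ex P (fun w' => INR (cut_capacity C Vk t w'))))
   <= exp (- (eps ^ 2 * INR (n - k) * p' / 2 - ln (INR k + 1))))%R.
Proof.
move=> HPr _ _ Hp Hind Hk He.
have HP := proj1 HPr.
set s0 : seq (vertex n m) := [seq relay i | i <- enum (~: Vk)].
have Hs0u : uniq s0 by rewrite map_inj_uniq ?enum_uniq // => i j [].
have Hsize0 : size s0 = (n - k)%N.
  have := cardsC Vk; rewrite card_ord Hk => E.
  move/(congr1 (fun x => x - k)%N): E; rewrite addKn => <-; by rewrite size_map -cardE.
have Hjs0 : forall j, j \in s0 -> joinable src j by move=> j /mapP [i _ ->].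
have Hsju : uniq (term t :: s0).
  rewrite /= Hs0u andbT; by apply/mapP => [[i _]].
have Hsj : forall j, j \in Vk -> forall u, u \in term t :: s0 -> joinable (relay j) u.
  move=> j jV u; rewrite in_cons => /orP [/eqP -> //|/mapP [i iV ->]].
  rewrite /joinable /= andbT; apply/eqP => [[E]]; move: iV.
  by rewrite mem_enum in_setC -E jV.
set Xs := fun w => (\sum_(u <- s0) C src u w)%N.
set Y := fun j w => (\sum_(u <- term t :: s0) C (relay j) u w)%N.
have Hcut : forall w, INR (cut_capacity C Vk t w)
   = (INR (Xs w) + \big[Rplus/0%R]_(j <- enum Vk) INR (Y j w))%R.
  move=> w; rewrite -(big_morph INR (fun x y => plus_INR x y) (erefl (INR 0))) -plus_INR.
  congr INR; rewrite ?plusE /cut_capacity /Xs /Y /s0 big_map big_enum -addnA; congr addn.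
  rewrite big_enum -big_split /=; apply: eq_bigr => j _.
  by rewrite big_cons big_map big_enum addnC.
have [E0 Pr0] := @group _ P _ _ C p' src s0 eps HPr Hind Hp Hs0u Hjs0 He.
have GY : forall j, j \in enum Vk ->
  Ex P (fun w => INR (Y j w)) = (INR (size (term t :: s0)) * p')%R /\
  (Pr P (fun w => Rleb (INR (Y j w)) ((1 - eps) * (INR (size (term t :: s0)) * p')))
    <= exp (- (eps ^ 2 * INR (size (term t :: s0)) * p' / 2)))%R.
  move=> j; rewrite mem_enum => jV; exact: (@group _ P _ _ C p' (relay j) (term t :: s0) eps HPr Hind Hp Hsju (Hsj j jV) He).
set A0 := (eps ^ 2 * INR (n - k) * p' / 2)%R.
have HEcut : Ex P (fun w' => INR (cut_capacity C Vk t w'))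
   = (Ex P (fun w => INR (Xs w)) + \big[Rplus/0%R]_(j <- enum Vk) Ex P (fun w => INR (Y j w)))%R.
  by rewrite (@Ex_ext _ P _ _ Hcut) Ex_add Ex_sum.
apply Rle_trans with (Pr P (fun w => Rleb (INR (Xs w)) ((1 - eps) * (INR (size s0) * p'))) +
  \big[Rplus/0%R]_(j <- enum Vk)
    Pr P (fun w => Rleb (INR (Y j w)) ((1 - eps) * (INR (size (term t :: s0)) * p'))))%R.
  apply: union_bound => // w HA.
  case: (boolP (Rleb _ _)) => // nB.
  apply/negPn/negP => /hasPn nH.
  move: HA => /RlebP1; rewrite Hcut HEcut E0.
  have h1 := RlebN _ _ nB.
  have h2 : ((1 - eps) * \big[Rplus/0%R]_(j <- enum Vk) Ex P (fun w => INR (Y j w))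
     <= \big[Rplus/0%R]_(j <- enum Vk) INR (Y j w))%R.
    rewrite -sum_scale; apply: sum_le_seq => j jV.
    rewrite (proj1 (GY j jV)); apply: Rlt_le; apply: RlebN; exact: nH.
  set SY := \big[Rplus/0%R]_(j <- enum Vk) _ in h2 *.
  set SE := \big[Rplus/0%R]_(j <- enum Vk) _ in h2 *.
  move=> h3; nra.
apply Rle_trans with (exp (- A0) + \big[Rplus/0%R]_(j <- enum Vk) exp (- A0))%R.
  apply Rplus_le_compat.
    apply: Rle_trans; first exact: Pr0.
    by rewrite Hsize0; apply: Rle_refl.
  apply: sum_le_seq => j jV; apply: Rle_trans; first exact: (proj2 (GY j jV)).
  apply: exp_le; rewrite /A0 -Hsize0 (_ : size (term t :: s0) = (size s0).+1) // S_INR.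
  have : (0 <= eps ^ 2 * p')%R by apply Rmult_le_pos; [apply pow2_ge_0|lra].
  set N := INR _; nra.
rewrite sum_const_R -cardE Hk.
rewrite (_ : (- (A0 - ln (INR k + 1)) = - A0 + ln (INR k + 1))%R); last by ring.
rewrite exp_plus exp_ln; last by have := pos_INR k; lra.
right; ring.
Qed.
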